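(* Let $(G,\ell)$ be an instance of \textsc{Geometric Thickness} with $\ell\ge 2$, let $F$ be a minimum feedback edge set of $G$ of size $k$, and let $G_j$ be the graph constructed as follows. Let $G'$ be obtained from $G$ by exhaustively deleting vertices of degree $0$ or $1$; let $T$ be the forest with $V(T)=V(G')$ and $E(T)=E(G')\setminus F$; let $C$ be the union of $\{v\in V(T):\deg_T(v)\ge 3\}$ and the set of endpoints of edges of $F$; decompose $T$ into the $x$ edge-disjoint paths whose endpoints lie in $C$ and whose internal vertices lie outside $C$, and order them by length as $P_1,\dots,P_x$ with $|E(P_1)|\le\dots\le|E(P_x)|$; let $G_0=(C,F)$ and $G_i=G_0\cup P_1\cup\dots\cup P_i$ for $i\in[x]$; finally let $j$ be the smallest element of $\{0,\dots,x-1\}$ with $|E(P_{j+1})|>2(|E(G_j)|+x)$ if such an element exists, and $j=x$ otherwise. Then $G_j$ has at most $10k\cdot 81^k$ vertices.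
   Context: A feedback edge set of $G$ is a set of edges whose removal makes $G$ acyclic. \textsc{Geometric Thickness}: given a graph $G$ and integer $\ell$, decide whether there is a straight-line drawing of $G$ with an edge coloring in $[\ell]$ such that no two same-colored edges cross. *)

(* Defs.v *)
From mathcomp Require Import all_boot.
Set Implicit Arguments. Unset Strict Implicit. Unset Printing Implicit Defensive.

Section Defs.
Variable V : finType.
Implicit Types (E F : {set {set V}}) (S C : {set V}) (p : seq V) (P : seq (seq V)).

Definition simple_graph E : Prop := forall e, e \in E -> #|e| = 2.

Definition is_cycle E (c : seq V) : bool :=
  [&& uniq c, 2 < size c & cycle (fun a b => [set a; b] \in E) c].

Definition acyclic E : Prop := forall c : seq V, ~~ is_cycle E c.

Definition feedback_edge_set E F : Prop := F \subset E /\ acyclic (E :\: F).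

Definition min_feedback_edge_set E F : Prop :=
  feedback_edge_set E F /\ forall F', feedback_edge_set E F' -> #|F| <= #|F'|.

Definition deg_in E S (v : V) : nat := #|[set e in E | (v \in e) && (e \subset S)]|.

Definition prune_step E S : {set V} := [set v in S | 2 <= deg_in E S v].

(* G' : exhaustive deletion of vertices of degree 0 or 1 (#|V| rounds suffice) *)
Definition VG' E : {set V} := iter #|V| (prune_step E) setT.
Definition EG' E : {set {set V}} := [set e in E | e \subset VG' E].

Definition ET E F : {set {set V}} := EG' E :\: F.
Definition degT E F (v : V) : nat := #|[set e in ET E F | v \in e]|.

Definition Cset E F : {set V} :=
  [set v in VG' E | 3 <= degT E F v] :|: \bigcup_(e in F) e.

Definition pedges p : seq {set V} := map (fun ab => [set ab.1; ab.2]) (zip p (behead p)).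
Definition plen p : nat := (size p).-1.

Definition valid_path E F p : bool :=
  match p with
  | [::] => false
  | a :: s => [&& uniq p, s != [::],
                  all (fun e => e \in ET E F) (pedges p),
                  a \in Cset E F, last a s \in Cset E F &
                  all (fun v => v \notin Cset E F) (take (size s).-1 s)]
  end.

Definition path_decomposition E F P : Prop :=
  [/\ all (valid_path E F) P,
      forall e, e \in ET E F -> count (fun p => e \in pedges p) P = 1 &
      sorted leq (map plen P)].

Definition GV E F P (i : nat) : {set V} :=
  Cset E F :|: \bigcup_(p <- take i P) [set v | v \in p].
Definition GE F P (i : nat) : {set {set V}} :=
  F :|: \bigcup_(p <- take i P) [set e | e \in pedges p].

Definition stop_cond F P (i : nat) : bool :=
  2 * (#|GE F P i| + size P) < plen (nth [::] P i).
End Defs.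

(* Main.v *)
Require Import Defs.
From mathcomp Require Import all_boot zify.
Set Implicit Arguments. Unset Strict Implicit. Unset Printing Implicit Defensive.

Section Forest.
Variable V : finType.
Implicit Types (E : {set {set V}}) (S : {set V}).

Lemma acyclic_sub E1 E2 : E1 \subset E2 -> acyclic E2 -> acyclic E1.
Proof.
move=> sub ac c; apply/negP => /and3P [u sz cy].
have := ac c; rewrite /is_cycle u sz /=; move/negP; apply.
case: c cy {u sz} => //= a s; apply: sub_path => x y /= h; exact: (subsetP sub).
Qed.

Lemma edge_at E v e : (forall e, e \in E -> #|e| = 2) -> e \in E -> v \in e ->
  exists w, w != v /\ e = [set v; w].
Proof.
move=> sE eE ve; have /cards2P [x [y [xy ee]]] : #|e| == 2 by rewrite sE.
move: ve; rewrite ee !inE => /orP [] /eqP ->.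
  by exists y; split; [rewrite eq_sym|].
by exists x; split; [|rewrite setUC].
Qed.

Definition adjE E := fun a b : V => [set a; b] \in E.

Definition good E S (p : seq V) :=
  if p is v :: r then [&& uniq p, all (mem S) p & path (adjE E) v r] else false.

Lemma grow E S p : simple_graph E -> acyclic E ->
  (forall v, v \in S -> 2 <= #|[set e in E | v \in e]|) ->
  (forall e, e \in E -> e \subset S) ->
  good E S p -> exists q, good E S q /\ size q = (size p).+1.
Proof.
move=> sE ac deg eS; case: p => // v r /and3P [u al pa].
have vS : v \in S by move: al => /= /andP [].

have : exists e, [&& e \in E, v \in e & e != [set v; (head v r)]].
  apply/existsP; move: (deg v vS); apply: contraLR.
  rewrite negb_exists => /forallP H.
  rewrite -ltnNge ltnS.
  apply: (leq_trans (n := #|[set [set v; (head v r)]]|)); last by rewrite cards1.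
  apply: subset_leq_card; apply/subsetP => e; rewrite !inE => /andP [eE ve].
  by have := H e; rewrite eE ve /= negbK.
case=> e /and3P [eE ve ne].
have [w [wv ee]] := edge_at sE eE ve.
have wu : w != (head v r) by apply: contraNneq ne => h; rewrite ee h.
have wS : w \in S by apply: (subsetP (eS _ eE)); rewrite ee !inE eqxx orbT.
case wp: (w \in v :: r).
- exfalso.
  move: wp; rewrite inE (negbTE wv) /= => wr.
  clear ne; case: r u al pa wu wr => // u1 r' u al pa wu wr.
  set r := u1 :: r'.
  set c := v :: take (index w r).+1 r.
  have := ac c; rewrite /is_cycle; move/negP; apply; apply/and3P; split.
  + have /andP [vr ur] : (v \notin r) && uniq r by exact: u.
    rewrite /c cons_uniq take_uniq // andbT.
    by apply: contra vr; apply: mem_take.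
  + change (2 < (size (take (index w r).+1 r)).+1); rewrite size_take.
    have iw : index w r < size r by rewrite index_mem.
    have i1 : 0 < index w r.
      rewrite lt0n; apply: contra wu => /eqP h.
      by have := nth_index w wr; rewrite h /= => <-.
    case: ifP => _; lia.
  + change (path (adjE E) v (rcons (take (index w r).+1 r) v)).
    rewrite rcons_path; apply/andP; split; first exact: take_path.
    have iw : index w r < size r by rewrite index_mem.
    rewrite (take_nth w iw) last_rcons nth_index //.
    by rewrite /adjE setUC -ee.
- exists (w :: v :: r); split => //=.
  apply/and3P; split.
  + by rewrite wp; exact: u.
  + by rewrite wS; exact: al.
  + apply/andP; split => //; by rewrite /adjE setUC -ee.
Qed.

Lemma no_good E S : simple_graph E -> acyclic E ->
  (forall v, v \in S -> 2 <= #|[set e in E | v \in e]|) ->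
  (forall e, e \in E -> e \subset S) ->
  forall m p, good E S p -> #|V| < size p + m -> False.
Proof.
move=> sE ac deg eS; elim=> [|m IH] p gp.
- rewrite addn0.
  case: p gp => // v r /and3P [u _ _].
  by rewrite -(card_uniqP u) ltnNge max_card.
- have [q [gq sq]] := grow sE ac deg eS gp.
  move=> h; apply: (IH q gq); rewrite sq; lia.
Qed.

Lemma forest_bound n E S : #|S| = n -> simple_graph E -> acyclic E ->
  (forall e, e \in E -> e \subset S) -> #|E| <= #|S|.
Proof.
elim: n E S => [|n IH] E S cS sE ac eS.
- have S0 : S = set0 by apply/eqP; rewrite -cards_eq0 cS.
  suff -> : E = set0 by rewrite cards0.
  apply/eqP; rewrite -subset0; apply/subsetP => e eE.
  have := sE e eE; have := eS e eE; rewrite S0 subset0 => /eqP ->.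
  by rewrite cards0.
- case: (boolP [exists v, (v \in S) && (#|[set e in E | v \in e]| <= 1)]).
  + case/existsP => v /andP [vS dv].
    set E' := [set e in E | v \notin e].
    have hE' : #|E'| <= #|S :\ v|.
      apply: IH.
      * by rewrite (cardsD1 v S) vS in cS; case: cS.
      * by move=> e; rewrite inE => /andP [/sE].
      * apply: acyclic_sub ac; by apply/subsetP => e; rewrite inE => /andP [].
      * move=> e; rewrite inE => /andP [eE ve]; apply/subsetP => x xe.
        rewrite !inE (subsetP (eS _ eE) _ xe) andbT.
        by apply: contra ve => /eqP <-.
    have : #|E| <= #|E'| + #|[set e in E | v \in e]|.
      rewrite -(cardsID [set e : {set V} | v \in e] E) addnC leq_add //.
        by apply: subset_leq_card; apply/subsetP => e; rewrite !inE andbC.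
      by apply: subset_leq_card; apply/subsetP => e; rewrite !inE andbC.
    rewrite (cardsD1 v S) vS in hE' *; lia.
  + rewrite negb_exists => /forallP H.
    case: (set_0Vmem S) => [S0|[v vS]].
      by move: cS; rewrite S0 cards0.
    exfalso; apply: (no_good sE ac (S := S) _ eS (m := #|V|) (p := [:: v])).
    * move=> x xS; have := H x; rewrite xS /=; lia.
    * by rewrite /good /= vS.
    * by rewrite /=.
Qed.
End Forest.

Section P2.
Variable V : finType.
Implicit Types (E F : {set {set V}}) (S : {set V}).

Lemma card_sumE (T : finType) (P : pred T) :
  #|[set x | P x]| = \sum_x (P x : nat).
Proof.
rewrite -sum1dep_card big_mkcond /=; apply: eq_bigr => x _; by case: (P x).
Qed.

Lemma card_sumS (T : finType) (A : {set T}) : #|A| = \sum_x (x \in A : nat).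
Proof. by rewrite -card_sumE; apply: eq_card => x; rewrite inE. Qed.

Lemma degsum E : simple_graph E ->
  \sum_v #|[set e in E | v \in e]| = 2 * #|E|.
Proof.
move=> sE.
rewrite (eq_bigr (fun v => \sum_e ((e \in E) && (v \in e) : nat))); last first.
  by move=> v _; rewrite -card_sumE.
rewrite exchange_big /=.
rewrite (eq_bigr (fun e => (e \in E : nat) * 2)); last first.
  move=> e _; case eE: (e \in E) => /=; last by rewrite big1.
  by rewrite -(sE e eE) card_sumS mul1n.
by rewrite -big_distrl /= -card_sumS mulnC.
Qed.

Lemma prune_sub E S : prune_step E S \subset S.
Proof. by apply/subsetP => v; rewrite inE => /andP []. Qed.

Lemma VG'_fix E : prune_step E (VG' E) = VG' E.
Proof.
set f := prune_step E.
have H : forall n, (#|iter n f setT| + n <= #|V|) \/ f (iter n f setT) = iter n f setT.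
  elim => [|n [h|h]].
  - by left; rewrite addn0 /= cardsT.
  - case: (eqVneq (f (iter n f setT)) (iter n f setT)) => e.
      by right; rewrite /= e e.
    left; rewrite /=.
    have : f (iter n f setT) \proper iter n f setT by rewrite properEneq e prune_sub.
    move=> /proper_card hc; rewrite addnS; apply: leq_trans h; rewrite ltn_add2r; exact: hc.
  - by right; rewrite /= h h.
rewrite /VG'; case: (H #|V|) => // h.
have : iter #|V| f setT = set0 by apply/eqP; rewrite -cards_eq0; apply/eqP; lia.
move=> ->; apply/eqP; rewrite -subset0; exact: prune_sub.
Qed.

Lemma VG'_deg E v : v \in VG' E -> 2 <= deg_in E (VG' E) v.
Proof. by rewrite -{1}VG'_fix inE => /andP []. Qed.

Lemma count2 (T : Type) (a : pred T) (x0 : T) (s : seq T) i j :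
  i < j -> j < size s -> a (nth x0 s i) -> a (nth x0 s j) -> 1 < count a s.
Proof.
elim: s i j => [|y s IH] [|i] [|j] //= ij js ai aj.
- rewrite ai add1n ltnS -has_count; apply/(has_nthP x0); by exists j.
- have := IH i j ij js ai aj; lia.
Qed.

Lemma pedges_nth (x0 : V) (p : seq V) i : i.+1 < size p ->
  [set nth x0 p i; nth x0 p i.+1] \in pedges p.
Proof.
elim: p i => [|a [|b s] IH] [|i] //= h.
- by rewrite /pedges /= inE eqxx.
- rewrite /pedges /= inE; apply/orP; right; exact: (IH i h).
Qed.

Lemma size_pedges (p : seq V) : size (pedges p) = plen p.
Proof. by rewrite /pedges size_map size_zip size_behead /plen; lia. Qed.

End P2.

Section P3.
Variable V : finType.
Lemma valid_facts (E F : {set {set V}}) p (x0 : V) : valid_path E F p ->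
  [/\ 1 < size p, uniq p, nth x0 p 0 \in Cset E F, nth x0 p (size p).-1 \in Cset E F &
   forall i, i.+1 < size p -> [set nth x0 p i; nth x0 p i.+1] \in ET E F].
Proof.
case: p => // a s /= /andP [u /and5P [sn al aC lC _]].
have ss : 0 < size s by case: s sn {u al lC}.
split => //.
- by rewrite -(last_nth x0).
- move=> i hi; move/allP: al; apply; exact: pedges_nth.
Qed.
End P3.

Theorem mainTheorem9 (V : finType) (E : {set {set V}}) (l : nat)
    (F : {set {set V}}) (P : seq (seq V)) (j : nat) :
  simple_graph E -> 2 <= l ->
  min_feedback_edge_set E F ->
  path_decomposition E F P ->
  j <= size P ->
  (forall i, i < j -> ~~ stop_cond F P i) ->
  (j < size P -> stop_cond F P j) ->
  #|GV E F P j| <= 10 * #|F| * 81 ^ #|F|.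
Proof.
move=> sE _ [[FE acF] _] [allv cnt srt] jP nstop _.
set S := VG' E. set T := ET E F. set C := Cset E F. set k := #|F|.
set x := size P.
set dT := degT E F.
set fF := fun v => #|[set e in F | v \in e]|.
set VF := \bigcup_(e in F) e.
have sT : simple_graph T.
  by move=> e; rewrite !inE => /andP [_ /andP [/sE]].
have TS : forall e, e \in T -> e \subset S.
  by move=> e; rewrite !inE => /andP [_ /andP []].
have acT : acyclic T.
  apply: acyclic_sub acF; apply/subsetP => e; rewrite !inE.
  by move=> /andP [-> /andP [-> _]].
have sF : simple_graph F by move=> e /(subsetP FE) /sE.
have TleS : #|T| <= #|S| by exact: (forest_bound (erefl _) sT acT TS).
have sumT : \sum_v dT v = 2 * #|T| by exact: degsum.
have sumF : \sum_v fF v = 2 * k by exact: degsum.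
have F4 : forall v, v \in S -> 2 <= dT v + fF v.
  move=> v vS; apply: leq_trans (VG'_deg vS) _.
  rewrite /deg_in /dT /degT /fF -/S -/T.
  apply: leq_trans (leq_card_setU _ _).
  apply: subset_leq_card; apply/subsetP => e; rewrite !inE.
  move=> /andP [eE /andP [ve eS]]; rewrite ve eE eS /= !andbT.
  by case: (e \in F).
have F5 : forall v, v \notin S -> dT v = 0.
  move=> v vS; apply/eqP; rewrite cards_eq0; apply/eqP/setP => e.
  rewrite in_set0 in_set; apply/negP => /andP [eT ve]; move: vS; rewrite (subsetP (TS e eT)) //.
have F6 : forall v, v \notin VF -> fF v = 0.
  move=> v vF; apply/eqP; rewrite cards_eq0; apply/eqP/setP => e; rewrite !inE.
  apply/negP => /andP [eF ve]; move: vF; apply/negP; rewrite negbK.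
  by apply/bigcupP; exists e.
have F7 : forall v, (v \in VF : nat) <= fF v.
  move=> v; case: (boolP (v \in VF)) => //= /bigcupP [e eF ve].
  by rewrite card_gt0; apply/set0Pn; exists e; rewrite inE eF ve.
have VFk : #|VF| <= 2 * k.
  by rewrite card_sumS -sumF; apply: leq_sum => v _; exact: F7.
set H := [set v in S | (3 <= dT v) && (v \notin VF)].
have Hk : #|H| <= 2 * k.
  have : 2 * #|S| + #|H| <= 2 * #|S| + 2 * k.
    apply: leq_trans (_ : \sum_v (dT v + fF v) <= _); last first.
      by rewrite big_split /= sumT sumF; lia.
    rewrite !card_sumS big_distrr /= -big_split /=.
    apply: leq_sum => v _; rewrite !inE.
    case: (boolP (v \in S)) => vS /=; last lia.
    have := F4 v vS; case: (ltnP 2 (dT v)) => h /=; lia.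
  lia.
have Ck : #|C| <= 4 * k.
  apply: leq_trans (_ : #|H :|: VF| <= _).
    apply: subset_leq_card; apply/subsetP => v; rewrite !inE.
    rewrite -/S -/dT -/VF; by case: (v \in VF); rewrite ?orbT // !orbF andbT.
  apply: leq_trans (leq_card_setU _ _) _; lia.
have Q2 : \sum_v dT v * (v \in C) <= 2 * #|C|.
  have : \sum_v dT v * (v \in C) + 2 * #|S| <= 2 * #|T| + 2 * #|C|.
    rewrite -sumT !card_sumS !big_distrr /= -!big_split /=.
    apply: leq_sum => v _.
    case: (boolP (v \in C)) => vC /=; first by case: (v \in S) => /=; lia.
    case: (boolP (v \in S)) => vS /=; last lia.
    have : v \notin VF by apply: contra vC; rewrite !inE => ->; rewrite orbT.
    move/F6; have := F4 v vS; lia.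
  lia.
have xC : x <= #|C|.
  case: (posnP x) => [-> //|x0P].
  have vf : forall i, i < x -> valid_path E F (nth [::] P i).
    by move=> i ix; move/allP: allv; apply; apply: mem_nth.
  have [x0 _] : exists x0 : V, True.
    by case: (nth [::] P 0) (vf 0 x0P) => // a _ _; exists a.
  pose g (z : 'I_x * bool) : V * {set V} :=
    let p := nth [::] P z.1 in
    if z.2 then (nth x0 p 0, [set nth x0 p 0; nth x0 p 1])
    else (nth x0 p (size p).-1, [set nth x0 p (size p).-2; nth x0 p (size p).-1]).
  have gP : forall z, [/\ (g z).1 \in C, (g z).2 \in T, (g z).1 \in (g z).2 &
                         (g z).2 \in pedges (nth [::] P z.1)].
    case=> i b; have [s2 _ h0 hl he] := valid_facts x0 (vf i (ltn_ord i)).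
    rewrite /g /=; case: b => /=; split => //.
    - exact: he.
    - by rewrite !inE eqxx.
    - exact: pedges_nth.
    - have -> : (size (nth [::] P i)).-1 = (size (nth [::] P i)).-2.+1 by lia.
      apply: he; lia.
    - by rewrite !inE eqxx orbT.
    - have -> : (size (nth [::] P i)).-1 = (size (nth [::] P i)).-2.+1 by lia.
      apply: pedges_nth; lia.
  have ginj : injective g.
    case=> i b [i' b'] e.
    have [_ eT _ e1] := gP (i, b); have [_ _ _ e2] := gP (i', b').
    rewrite e in eT e1.
    have ii : i = i'.
      apply/val_inj/eqP; apply/negP => /negP ne.
      have := cnt _ eT.
      case: (ltngtP i i') ne => // h _.
      + by have := count2 (a := fun p => (g (i', b')).2 \in pedges p) (x0 := [::]) h (ltn_ord i') e1 e2 => h2 c1; rewrite c1 in h2.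
      + by have := count2 (a := fun p => (g (i', b')).2 \in pedges p) (x0 := [::]) h (ltn_ord i) e2 e1 => h2 c1; rewrite c1 in h2.
    subst i'; clear e1 e2 eT; congr (_, _).
    have [s2 u _ _ _] := valid_facts x0 (vf i (ltn_ord i)).
    move: e; rewrite /g /=.
    case: b; case: b' => //= e; exfalso; case: e => e0 _; move/eqP: e0;
      rewrite nth_uniq //; move: s2; set n := size (nth [::] P i); try lia;
      move=> s2 /eqP; lia.
  have Zc : #|[set z : V * {set V} | [&& z.1 \in C, z.2 \in T & z.1 \in z.2]]| =
            \sum_v dT v * (v \in C).
    rewrite card_sumE.
    rewrite -(pair_big predT predT (fun v e => ([&& v \in C, e \in T & v \in e] : nat))) /=.
    apply: eq_bigr => v _; rewrite /dT /degT -/T card_sumE.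
    case: (v \in C) => /=; first by rewrite muln1.
    by rewrite muln0 big1.
  suff : x * 2 <= 2 * #|C| by lia.
  apply: leq_trans Q2; rewrite -Zc.
  have <- : #|[set: 'I_x * bool]| = x * 2 by rewrite cardsT card_prod card_ord card_bool.
  rewrite -(card_imset _ ginj); apply: subset_leq_card; apply/subsetP => z.
  case/imsetP => y _ ->; have [h1 h2 h3 _] := gP y; by rewrite inE h1 h2 h3.
have stepE : forall i, i < x -> #|GE F P i.+1| <= #|GE F P i| + plen (nth [::] P i).
  move=> i ix; rewrite /GE (take_nth [::] ix) -cats1 big_cat big_seq1 /= setUA.
  apply: leq_trans (leq_card_setU _ _) _; rewrite leq_add2l.
  rewrite -size_pedges; apply: (leq_trans _ (card_size _)); apply: subset_leq_card.
  by apply/subsetP => e; rewrite inE.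
have stepV : forall i, i < x -> #|GV E F P i.+1| <= #|GV E F P i| + (plen (nth [::] P i)).+1.
  move=> i ix; rewrite /GV (take_nth [::] ix) -cats1 big_cat big_seq1 /= setUA.
  apply: leq_trans (leq_card_setU _ _) _; rewrite leq_add2l.
  apply: (leq_trans _ (_ : size (nth [::] P i) <= _)); last by rewrite /plen; lia.
  apply: (leq_trans _ (card_size _)); apply: subset_leq_card.
  by apply/subsetP => e; rewrite inE.
have ind : forall i, i <= j -> #|GE F P i| + x <= 3 ^ i * (k + x) /\ #|GV E F P i| + (k + x) <= #|C| + i + 3 ^ i * (k + x).
  elim => [|i IH] ij.
    rewrite /GE /GV take0 !big_nil !setU0 expn0 mul1n -/C -/k; lia.
  have [IH1 IH2] := IH (ltnW ij).
  have ix : i < x by lia.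
  have ns := nstop i ij; rewrite /stop_cond -leqNgt in ns.
  have := stepE i ix; have := stepV i ix.
  rewrite expnS -mulnA; move: (3 ^ i * (k + x)) IH1 IH2 => z IH1 IH2; lia.
have [_ Hj] := ind j (leqnn j).
have zM : 3 ^ j <= 81 ^ k.
  rewrite (_ : 81 = 3 ^ 4) // -expnM; apply: leq_pexp2l => //; lia.
have M1 : 0 < 81 ^ k by rewrite expn_gt0.
have h1 : 3 ^ j * (k + x) <= 5 * (k * 81 ^ k).
  rewrite mulnC; apply: leq_trans (leq_mul (_ : k + x <= 5 * k) zM) _; [lia | by rewrite mulnA].
have h2 : k <= k * 81 ^ k by rewrite leq_pmulr.
rewrite -mulnA; move: (3 ^ j * (k + x)) (k * 81 ^ k) h1 h2 Hj => z M h1 h2 Hj; lia.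
Qed.
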